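(* Consider the noiseless least squares deterministic dynamics with exact line search described in the context. Then \[ \frac{\lambda_{\min}(K)}{\frac1d\mathrm{Tr}(K^2)}\le\gamma_t^{\mathrm{line}}\quad\text{for all }t\ge0. \] Moreover, suppose $K$ has only two distinct eigenvalues $\lambda_1>\lambda_2>0$, with $d/2$ eigenvalues equal to $\lambda_1$ and $d/2$ equal to $\lambda_2$. Then $\lim_{t\to\infty}\gamma_t^{\mathrm{line}}$ exists and \[ \frac{\lambda_{\min}(K)}{\frac1d\mathrm{Tr}(K^2)}\le\lim_{t\to\infty}\gamma_t^{\mathrm{line}}\le\frac{2\lambda_{\min}(K)}{\frac1d\mathrm{Tr}(K^2)}. \]
   Context: Noiseless least squares: $\mathcal R(X)=\frac12(X-X^\star)^TK(X-X^\star)$ with $K\in\mathbb R^{d\times d}$ symmetric positive definite with eigenpairs $(\lambda_i,\omega_i)$. Its deterministic equivalent dynamics under a learning-rate curve $\gamma_t$: functions $D_i^2(t)\ge0$ with $D_i^2(0)=d\langle X_0-X^\star,\omega_i\rangle^2$ solving $\frac{d}{dt}D_i^2(t)=-2\gamma_t\lambda_iD_i^2(t)+2\gamma_t^2\lambda_iR(t)$, where $R(t)=\frac1{2d}\sum_{i=1}^d\lambda_iD_i^2(t)$. Exact line search chooses at each time $\gamma_t=\gamma_t^{\mathrm{line}}\in\arg\min_\gamma\frac{d}{dt}R(t)$, which is \[\gamma_t^{\mathrm{line}}=\frac{\sum_{i=1}^d\lambda_i^2D_i^2(t)}{2\,\mathrm{Tr}(K^2)\,R(t)}.\] *)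

(* Defs.v *)
From HB Require Import structures.
From mathcomp Require Import all_boot all_order all_algebra.
From mathcomp Require Import all_classical all_reals all_analysis.
Set Implicit Arguments. Unset Strict Implicit. Unset Printing Implicit Defensive.
Import Order.TTheory GRing.Theory Num.Theory.
Import numFieldNormedType.Exports.
Local Open Scope ring_scope.

(* D2 i t stands for D_i^2(t). *)

Definition risk (R : realType) (d : nat) (lam : 'I_d -> R) (D2 : 'I_d -> R -> R)
  (t : R) : R :=
  (2 * d%:R)^-1 * \sum_(i < d) lam i * D2 i t.

Definition gamma_line (R : realType) (d : nat) (K : 'M[R]_d) (lam : 'I_d -> R)
  (D2 : 'I_d -> R -> R) (t : R) : R :=
  (\sum_(i < d) lam i ^+ 2 * D2 i t) / (2 * \tr (K *m K) * risk lam D2 t).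

(* Minimum of the (complete list of) eigenvalues lam_0, ..., lam_{d-1}
   (the default value is irrelevant when d > 0: it is one of the lam i). *)
Definition lambda_min (R : realType) (d : nat) (lam : 'I_d -> R) : R :=
  \big[Num.min/(if [pick i : 'I_d] is Some i0 then lam i0 else 0)]_(i < d) lam i.

Definition inner (R : realType) (d : nat) (u v : 'cV[R]_d) : R :=
  \sum_(j < d) u j 0 * v j 0.

(* Main.v *)
Require Import Defs.
From HB Require Import structures.
From mathcomp Require Import all_boot all_order all_algebra.
From mathcomp Require Import all_classical all_reals all_analysis.
From mathcomp Require Import ring lra.
Import Order.TTheory GRing.Theory Num.Theory.
Import numFieldNormedType.Exports.
Local Open Scope classical_set_scope.
Local Open Scope ring_scope.

Section Aux.
Variable R : realType.
Lemma is_derive_lin (a b x : R) : is_derive x 1 (fun s => a + b * s) b.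
Proof.
have H1 : is_derive x 1 (b \*: (@id R)) (b *: 1).
  exact: is_deriveZ.
have H2 := is_deriveD (is_derive_cst a x 1) H1.
rewrite add0r [b *: 1]mulr1 in H2.
have -> : (fun s => a + b * s) = cst a + b \*: id by [].
exact: H2.
Qed.

Lemma is_derive_expl (c x : R) :
  is_derive x 1 (fun s => expR (c * s)) (expR (c * x) * c).
Proof.
have H := @is_derive1_comp R expR (fun s => 0 + c * s) x _ _ _ (is_derive_lin 0 c x).
rewrite /= add0r in H.
have -> : (fun s => expR (c * s)) = expR \o (fun s => 0 + c * s).
  by apply/funext => s /=; rewrite add0r.
exact: H.
Qed.

Lemma pos_gronwall (f df : R -> R) (c : R) :
  0 < f 0 -> f x @[x --> 0^'+] --> f 0 ->
  (forall t : R, 0 < t -> is_derive t 1 f (df t)) ->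
  (forall t : R, 0 < t -> - c * f t <= df t) ->
  forall t : R, 0 <= t -> 0 < f t.
Proof.
move=> f0 fc df_ dfc t; rewrite le_eqVlt => /predU1P[<-//|t0].
pose h := fun s => expR (c * s).
pose g := f * h.
have dg (s : R) : 0 < s -> is_derive s 1 g (f s *: (expR (c * s) * c) + h s *: df s).
  move=> s0; apply: is_deriveM; [exact: df_ | exact: is_derive_expl].
have gmono : {in `]0, t + 1[ &, {homo g : x y / x <= y}}.
  apply: ger0_derive1_le_oo.
  - by move=> x; rewrite in_itv /= => /andP[x0 _]; case: (dg x x0).
  - move=> x; rewrite in_itv /= => /andP[x0 _].
    have dgx := dg x x0; rewrite derive1E derive_val /h /=.
    have e0 := expR_gt0 (c * x).
    have := dfc x x0; rewrite /GRing.scale /=; nra.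
  - move=> x; rewrite inE /= in_itv /= => /andP[x0 _].
    apply: differentiable_continuous; apply/derivable1_diffP.
    by case: (dg x x0).
rewrite ltNge; apply/negP => ft.
have gt : g t <= 0.
  by rewrite /g /= mulr_le0_ge0 // ltW // expR_gt0.
near ((0:R)^'+) => s.
have fs : 0 < f s by near: s; exact: cvgr_gt fc 0 f0.
have s0 : 0 < s by near: s; exact: nbhs_right_gt.
have st : s < t by near: s; exact: nbhs_right_lt.
have := gmono s t; rewrite !in_itv /= s0 t0 (ltW st) /=.
have -> : t < t + 1 by rewrite ltrDl.
have -> : s < t + 1 by rewrite (lt_trans st) // ltrDl.
move=> /(_ isT isT isT) gst.
have : 0 < g s by rewrite /g /= mulr_gt0 // expR_gt0.
by move=> /lt_le_trans /(_ (le_trans gst gt)); rewrite ltxx.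
Unshelve. all: end_near.
Qed.

Lemma decay (V dV : R -> R) (m : R) : 0 < m ->
  (forall t : R, 0 < t -> is_derive t 1 V (dV t)) ->
  (forall t : R, 0 < t -> 0 <= V t) ->
  (forall t : R, 0 < t -> dV t <= - m * V t) ->
  forall t : R, 1 <= t -> V t * ((1 - m) + m * t) <= V 1.
Proof.
move=> m0 dV_ V0 dVm t t1.
pose h := V * (fun s => (1 - m) + m * s).
have dh (s : R) : 0 < s -> is_derive s 1 h (V s *: m + ((1 - m) + m * s) *: dV s).
  move=> s0; apply: is_deriveM; [exact: dV_ | exact: is_derive_lin].
have hmono : {in `[1, t + 1[ &, {homo h : x y /~ x <= y}}.
  apply: ler0_derive1_le_co.
  - by move=> x; rewrite in_itv /= => /andP[x0 _]; case: (dh x (lt_trans ltr01 x0)).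
  - move=> x; rewrite in_itv /= => /andP[x0 _].
    have x0' : 0 < x by exact: lt_trans ltr01 x0.
    have dhx := dh x x0'; rewrite derive1E derive_val /=.
    have := dVm x x0'; have := V0 x x0'; rewrite /GRing.scale /=; move=> Vx dVx.
    have p1 : 0 <= 1 - m + m * x by nra.
    have p2 : 0 <= m * (m * (x - 1) * V x) by apply: mulr_ge0; [exact: ltW | apply: mulr_ge0 => //; apply: mulr_ge0; [exact: ltW | by rewrite subr_ge0 ltW]].
    nra.
  - apply: derivable_within_continuous => x; rewrite in_itv /= => /andP[x0 _].
    by case: (dh x (lt_le_trans ltr01 x0)).
have := hmono t 1; rewrite !in_itv /= lexx t1 /=.
have -> : 1 < t + 1 by rewrite (le_lt_trans t1) // ltrDl.
have -> : t < t + 1 by rewrite ltrDl.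
move=> /(_ isT isT isT); rewrite /h /=.
have -> : (V * (fun s : R => 1 - m + m * s)) t = V t * (1 - m + m * t) by [].
have -> : (V * (fun s : R => 1 - m + m * s)) 1 = V 1 * (1 - m + m * 1) by [].
by rewrite mulr1 subrK mulr1.
Qed.
End Aux.
Section M.
Variable R : realType.
Lemma sum_cvg (d : nat) (lam : 'I_d -> R) (D2 : 'I_d -> R -> R) :
  (forall i : 'I_d, D2 i x @[x --> (0:R)^'+] --> D2 i 0) ->
  (fun x => \sum_(i < d) lam i * D2 i x) x @[x --> (0:R)^'+] --> \sum_(i < d) lam i * D2 i 0.
Proof.
move=> H.
apply: (@cvg_big _ _ +%R 0 _ add_continuous) => i _; apply: cvgM; [exact: cvg_cst | exact: H].
Qed.
End M.
Section M2.
Context {R : realType} {d : nat}.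
Implicit Types (K W : 'M[R]_d) (lam : 'I_d -> R).

Lemma colTcol W i : ((col i W)^T *m col i W) 0 0 = (W^T *m W) i i.
Proof. by rewrite !mxE; apply: eq_bigr => k _; rewrite !mxE. Qed.

Lemma lam_pos K W lam :
  (forall v : 'cV[R]_d, v != 0 -> 0 < (v^T *m K *m v) 0 0) ->
  W^T *m W = 1%:M ->
  (forall i : 'I_d, K *m col i W = lam i *: col i W) -> forall i, 0 < lam i.
Proof.
move=> PD WW eig i.
have v0 : col i W != 0.
  apply/negP => /eqP v0.
  have := colTcol W i; rewrite v0 WW trmx0 mul0mx !mxE eqxx /=.
  by move/eqP; rewrite eq_sym oner_eq0.
have := PD _ v0; rewrite -mulmxA eig -scalemxAr mxE colTcol WW mxE eqxx.
by rewrite mulr1.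
Qed.

Lemma KW_entry K W lam :
  (forall i : 'I_d, K *m col i W = lam i *: col i W) ->
  forall j i, (K *m W) j i = lam i * W j i.
Proof.
move=> eig j i.
have -> : (K *m W) j i = (K *m col i W) j 0.
  by rewrite !mxE; apply: eq_bigr => k _; rewrite !mxE.
by rewrite eig !mxE.
Qed.

Lemma trace_eq K W lam :
  K^T = K -> W^T *m W = 1%:M ->
  (forall i : 'I_d, K *m col i W = lam i *: col i W) ->
  \tr (K *m K) = \sum_(i < d) lam i ^+ 2.
Proof.
move=> KT WW eig.
have WWt : W *m W^T = 1%:M by exact: mulmx1C.
have -> : K *m K = (K *m W) *m (K *m W)^T.
  by rewrite trmx_mul KT mulmxA -(mulmxA K W) WWt mulmx1.
rewrite mxtrace_mulC /mxtrace; apply: eq_bigr => i _.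
have := congr1 (fun M : 'M[R]_d => M i i) WW; rewrite !mxE eqxx /= => Wii.
transitivity (lam i ^+ 2 * \sum_j (W^T) i j * W j i); last by rewrite Wii mulr1.
rewrite mulr_sumr; apply: eq_bigr => j _.
by rewrite [(K *m W)^T i j]mxE [W^T i j]mxE !(KW_entry K W lam eig); ring.
Qed.

Lemma inner_eq W (v : 'cV[R]_d) i : inner v (col i W) = (W^T *m v) i 0.
Proof. by rewrite /inner mxE; apply: eq_bigr => j _; rewrite !mxE mulrC. Qed.

End M2.

Section LM.
Context {R : realType} {d : nat}.

Lemma lmin_le (lam : 'I_d -> R) i : lambda_min lam <= lam i.
Proof.
rewrite /lambda_min.
have : i \in index_enum 'I_d by rewrite mem_index_enum.
elim: (index_enum 'I_d) => // a r IH.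
rewrite in_cons big_cons /= => /predU1P[<-|ir]; rewrite ge_min ?lexx //.
by rewrite IH // orbT.
Qed.

Lemma lmin_ind (lam : 'I_d -> R) (P : R -> Prop) : (0 < d)%N ->
  (forall i, P (lam i)) -> (forall x y, P x -> P y -> P (Num.min x y)) ->
  P (lambda_min lam).
Proof.
move=> d0 Hi Hm; rewrite /lambda_min; apply: big_ind => //.
case: pickP => [i0 _|H]; first exact: Hi.
by have := H (Ordinal d0).
Qed.

Lemma sum_ge_term (F : 'I_d -> R) i : (forall j, 0 <= F j) -> F i <= \sum_j F j.
Proof. by move=> H; rewrite (bigD1 i) //= lerDl sumr_ge0. Qed.

End LM.

Section Alg.
Context {R : realType}.

Definition Hf (l1 l2 p : R) : R :=
  (l2 + (l1 - l2) * p) * (l1 ^+ 2 + p * (l1 ^+ 2 + l2 ^+ 2)) - 2 * l1 * (l1 ^+ 2 + l2 ^+ 2) * p.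

Lemma root_facts (l1 l2 : R) : 0 < l2 -> l2 < l1 ->
  exists ps Lc, [/\ 0 <= ps, (l1 - l2) * ps <= l2, Lc < 0 &
    forall p, 0 <= p <= 1 -> exists Lp, Lp <= Lc /\ Hf l1 l2 p = (p - ps) * Lp].
Proof.
move=> l20 l12.
set c := l1 ^+ 2 + l2 ^+ 2.
set a := (l1 - l2) * c.
set b := l2 * c + (l1 - l2) * l1 ^+ 2 - 2 * l1 * c.
set e := l2 * l1 ^+ 2.
have c0 : 0 < c by rewrite /c; nra.
have a0 : 0 < a by rewrite /a mulr_gt0 // subr_gt0.
have HfE p : Hf l1 l2 p = a * p ^+ 2 + b * p + e by rewrite /Hf /a /b /e -/c; ring.
have H1 : a + b + e = - (l1 * l2 ^+ 2) by rewrite /a /b /e /c; ring.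
have e0 : 0 < e by rewrite /e mulr_gt0 // exprn_gt0 // (lt_trans l20 l12).
set disc := b ^+ 2 - 4 * a * e.
have dgt : (2 * a + b) ^+ 2 < disc.
  have -> : disc = (2 * a + b) ^+ 2 - 4 * a * (a + b + e) by rewrite /disc; ring.
  have : 0 < a * (l1 * l2 ^+ 2) by rewrite mulr_gt0 // mulr_gt0 // ?exprn_gt0 // (lt_trans l20 l12).
  rewrite H1; nra.
have d0 : 0 <= disc by apply: le_trans (ltW dgt); exact: sqr_ge0.
set s := Num.sqrt disc.
have s0 : 0 <= s := sqrtr_ge0 disc.
have s2 : s ^+ 2 = disc := sqr_sqrtr d0.
set ps := (- b - s) / (2 * a).
have aps : 2 * a * ps = - b - s by rewrite /ps; field; exact: lt0r_neq0.
have root : a * ps ^+ 2 + b * ps + e = 0.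
  have : 4 * a * (a * ps ^+ 2 + b * ps + e) = 0.
    have -> : 4 * a * (a * ps ^+ 2 + b * ps + e) =
       (2 * a * ps) ^+ 2 + 2 * b * (2 * a * ps) + 4 * a * e by ring.
    rewrite aps; rewrite /disc in s2; nra.
  move/eqP; rewrite mulf_eq0 => /orP[|/eqP //].
  by rewrite mulf_eq0 => /orP[|]; [rewrite pnatr_eq0|move=> /eqP a00; move: a0; rewrite a00 ltxx].
have Lc0 : a * (1 + ps) + b < 0.
  have : 2 * a + b < s by rewrite /disc in dgt s2; nra.
  nra.
have ps0 : 0 <= ps.
  have b0 : b < 0 by nra.
  have : s <= - b by rewrite /disc in s2; nra.
  nra.
have ps1 : ps < 1.
  have : Hf l1 l2 1 < 0 by rewrite HfE expr1n !mulr1 H1; nra.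
  rewrite HfE; nra.
exists ps, (a * (1 + ps) + b); split => //.
- rewrite leNgt; apply/negP => hps.
  set x0 := l2 / (l1 - l2).
  have l12' : 0 < l1 - l2 by rewrite subr_gt0.
  have x0E : (l1 - l2) * x0 = l2 by rewrite /x0; field; exact: lt0r_neq0.
  have x0ps : x0 < ps by rewrite -(ltr_pM2l l12') x0E.
  have x00 : 0 < x0 by rewrite /x0 divr_gt0.
  have : Hf l1 l2 x0 = - (2 * l2 ^+ 3).
    rewrite /Hf.
    have -> : l2 + (l1 - l2) * x0 = 2 * l2 by rewrite x0E; ring.
    rewrite /x0; field; exact: lt0r_neq0.
  rewrite HfE => hx.
  have : a * x0 ^+ 2 + b * x0 + e = (x0 - ps) * (a * (x0 + ps) + b).
    have : e = - (a * ps ^+ 2 + b * ps) by move: root; nra.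
    move=> ->; ring.
  rewrite hx => hx2.
  have x01 : x0 < 1 by exact: lt_trans x0ps ps1.
  have L : a * (x0 + ps) + b < 0 by nra.
  have : 0 < (x0 - ps) * (a * (x0 + ps) + b) by nra.
  rewrite -hx2; nra.
- move=> p /andP[p0 p1]; exists (a * (p + ps) + b); split.
    by rewrite lerD2r ler_pM2l // lerD2r.
  rewrite HfE.
  have : e = - (a * ps ^+ 2 + b * ps) by move: root; nra.
  move=> ->; ring.
Qed.
End Alg.

Theorem proposition1 (R : realType) (d : nat) (K : 'M[R]_d)
  (lam : 'I_d -> R) (W : 'M[R]_d) (X0 Xstar : 'cV[R]_d)
  (D2 : 'I_d -> R -> R) :
  (0 < d)%N ->
  K^T = K ->
  (forall v : 'cV[R]_d, v != 0 -> 0 < (v^T *m K *m v) 0 0) ->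
  W^T *m W = 1%:M ->
  (forall i : 'I_d, K *m col i W = lam i *: col i W) ->
  X0 != Xstar ->
  (forall i : 'I_d, D2 i 0 = d%:R * (inner (X0 - Xstar) (col i W)) ^+ 2) ->
  (forall i : 'I_d, forall t : R, 0 <= t -> 0 <= D2 i t) ->
  (forall i : 'I_d, D2 i x @[x --> 0^'+] --> D2 i 0) ->
  (forall i : 'I_d, forall t : R, 0 < t ->
     is_derive t 1 (D2 i)
       (- 2 * gamma_line K lam D2 t * lam i * D2 i t
        + 2 * gamma_line K lam D2 t ^+ 2 * lam i * risk lam D2 t)) ->
  (forall t : R, 0 <= t ->
     lambda_min lam / (d%:R^-1 * \tr (K *m K)) <= gamma_line K lam D2 t)
  /\
  ((exists l1 l2 : R, l1 > l2 /\ l2 > 0 /\ ~~ odd d /\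
      #|[pred i : 'I_d | lam i == l1]| = d./2 /\
      #|[pred i : 'I_d | lam i == l2]| = d./2) ->
   exists l : R,
     gamma_line K lam D2 t @[t --> +oo] --> l /\
     lambda_min lam / (d%:R^-1 * \tr (K *m K)) <= l /\
     l <= 2 * lambda_min lam / (d%:R^-1 * \tr (K *m K))).
Proof.
move=> d0 KT PD WW eig X0ne D2init D2ge0 D2cont D2der.
have lpos := lam_pos K W lam PD WW eig.
have Tr := trace_eq K W lam KT WW eig.
have dn0 : d%:R != 0 :> R by rewrite pnatr_eq0 -lt0n.
have dpos : 0 < d%:R :> R by rewrite ltr0n.
set T := \tr (K *m K) in Tr *.
have T0 : 0 < T.
  rewrite Tr; apply: (lt_le_trans _ (sum_ge_term (fun i => lam i ^+ 2) (Ordinal d0) _)).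
    by rewrite exprn_gt0.
  by move=> j; rewrite sqr_ge0.
pose S t := \sum_(i < d) lam i * D2 i t.
pose N t := \sum_(i < d) lam i ^+ 2 * D2 i t.
pose g t := gamma_line K lam D2 t.
have gamE (t : R) : g t = N t / (d%:R^-1 * T * S t).
  rewrite /g /gamma_line /risk; congr (_ / _); rewrite -/T /S; field; exact: dn0.
have Sge0 (t : R) : 0 <= t -> 0 <= S t.
  by move=> t0; rewrite /S; apply: sumr_ge0 => i _; apply: mulr_ge0; [exact: ltW | exact: D2ge0].
have Nge0 (t : R) : 0 <= t -> 0 <= N t.
  by move=> t0; rewrite /N; apply: sumr_ge0 => i _; apply: mulr_ge0; [exact: sqr_ge0 | exact: D2ge0].
have gS0 (t : R) : S t = 0 -> g t = 0 by move=> St; rewrite gamE St mulr0 invr0 mulr0.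
have NgS (t : R) : S t != 0 -> N t = g t * (d%:R^-1 * T * S t).
  move=> St; rewrite gamE divfK // mulf_neq0 // ?mulf_neq0 ?invr_eq0 //.
  exact: lt0r_neq0.
have Sder (t : R) : 0 < t -> is_derive t 1 S (- g t ^+ 2 * T * S t / d%:R).
  move=> t0.
  have H := is_derive_sum (fun i => is_deriveZ (lam i) (D2der i t t0)).
  have HS : \sum_(i < d) (lam i \*: D2 i) = S.
    by apply/funext => s; rewrite fct_sumE.
  rewrite HS in H.
  apply: is_derive_eq H _.
  rewrite -/(g t).
  transitivity (\sum_(i < d) ((-2 * g t) * (lam i ^+ 2 * D2 i t) +
                 (2 * g t ^+ 2 * risk lam D2 t) * lam i ^+ 2)).
    by apply: eq_bigr => i _; rewrite /GRing.scale /=; ring.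
  rewrite big_split /= -!mulr_sumr -/(N t) -Tr /risk -/(S t).
  have [St|St] := eqVneq (S t) 0.
    by rewrite gS0 // St; ring.
  rewrite (NgS t St); field; exact: dn0.
pose M := \sum_(i < d) lam i.
have lamM i : lam i <= M by apply: (sum_ge_term lam i) => j; exact: ltW.
have Mpos : 0 < M by apply: (lt_le_trans (lpos (Ordinal d0))).
have Tn0 : T != 0 by exact: lt0r_neq0.
have gb (t : R) : 0 <= t -> 0 <= g t /\ g t <= d%:R * M / T.
  move=> t0.
  have gge0 : 0 <= g t.
    rewrite gamE divr_ge0 ?Nge0 // mulr_ge0 ?Sge0 // mulr_ge0 ?invr_ge0 ?ler0n //.
    exact: ltW.
  split=> //.
  have [St|St] := eqVneq (S t) 0.
    by rewrite gS0 // divr_ge0 ?mulr_ge0 ?ler0n ?ltW.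
  have Spos : 0 < S t by rewrite lt_neqAle eq_sym St Sge0.
  rewrite gamE ler_pdivrMr ?mulr_gt0 ?invr_gt0 //.
  have -> : d%:R * M / T * (d%:R^-1 * T * S t) = M * S t by field; rewrite Tn0 dn0.
  rewrite /N /S mulr_sumr; apply: ler_sum => i _.
  rewrite expr2 -mulrA ler_wpM2r //; apply: mulr_ge0; [exact: ltW | exact: D2ge0].
have [i0 Hi0] : exists i, inner (X0 - Xstar) (col i W) != 0.
  case: (pickP (fun i => inner (X0 - Xstar) (col i W) != 0)) => [i Hi|H].
    by exists i.
  exfalso; move: X0ne; rewrite -subr_eq0 => /negP; apply.
  have WtV : W^T *m (X0 - Xstar) = 0.
    apply/matrixP => j k; rewrite (ord1 k) -inner_eq mxE.
    by have := H j => /= /negbFE /eqP.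
  by rewrite -[X0 - Xstar]mul1mx -(mulmx1C WW) -mulmxA WtV mulmx0.
have S0 : 0 < S 0.
  apply: (lt_le_trans _ (sum_ge_term (fun i => lam i * D2 i 0) i0 _)).
    have hi : 0 < inner (X0 - Xstar) (col i0 W) ^+ 2 by rewrite lt_def sqrf_eq0 Hi0 sqr_ge0.
    by rewrite /= D2init; apply: mulr_gt0 => //; apply: mulr_gt0.
  by move=> j; apply: mulr_ge0; [exact: ltW | exact: D2ge0].
have Spos : forall t : R, 0 <= t -> 0 < S t.
  apply: (@pos_gronwall R S (fun t => - g t ^+ 2 * T * S t / d%:R)
           ((d%:R * M / T) ^+ 2 * T / d%:R)) => //.
  - exact: (@sum_cvg R d lam D2 D2cont).
  - move=> t t0; have [g0 g1] := gb t (ltW t0); have Sg := Sge0 t (ltW t0).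
    have u0 : 0 < T / d%:R by rewrite divr_gt0.
    have E1 : - ((d%:R * M / T) ^+ 2 * T / d%:R) * S t =
              - ((d%:R * M / T) ^+ 2 * (T / d%:R) * S t) by ring.
    have E2 : - g t ^+ 2 * T * S t / d%:R = - (g t ^+ 2 * (T / d%:R) * S t) by ring.
    rewrite E1 E2 lerN2; apply: ler_wpM2r => //; apply: ler_wpM2r; first exact: ltW.
    nra.
split.
  move=> t t0; rewrite -[gamma_line K lam D2 t]/(g t) gamE.
  have St := Spos t t0.
  rewrite ler_pdivlMr ?mulr_gt0 ?invr_gt0 //.
  have -> : lambda_min lam / (d%:R^-1 * T) * (d%:R^-1 * T * S t) = lambda_min lam * S t.
    by field; rewrite Tn0 dn0.
  rewrite /S /N mulr_sumr; apply: ler_sum => i _.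
  rewrite expr2 -mulrA ler_wpM2r ?lmin_le //; apply: mulr_ge0; [exact: ltW | exact: D2ge0].
move=> [l1 [l2 [l12 [l20 [ev [c1 c2]]]]]].
set h := d./2 in c1 c2.
have dE : (h + h)%N = d.
  by have := odd_double_half d; rewrite (negbTE ev) add0n -addnn.
have dR : d%:R = 2 * h%:R :> R by rewrite -dE natrD; ring.
have h0 : (0 < h)%N by move: d0; rewrite -dE addn_gt0 orbb.
have hR : 0 < h%:R :> R by rewrite ltr0n.
have l1n2 : (l1 == l2) = false by exact: gt_eqF.
have l10 : 0 < l1 by exact: lt_trans l20 l12.
have allI i : lam i != l1 -> lam i = l2.
  move=> ne; apply/eqP; apply/negPn/negP => ne2.
  have cU : #|[predU [pred j : 'I_d | lam j == l1] & [pred j : 'I_d | lam j == l2]]| = d.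
    have := cardUI [pred j : 'I_d | lam j == l1] [pred j : 'I_d | lam j == l2].
    rewrite c1 c2 dE (@eq_card0 _ [predI _ & _]) ?addn0 // => j.
    by rewrite !inE; case: eqP => // ->; rewrite l1n2.
  have := cardC [predU [pred j : 'I_d | lam j == l1] & [pred j : 'I_d | lam j == l2]].
  rewrite cU card_ord => HC.
  have HC0 : #|[predC [predU [pred j : 'I_d | lam j == l1] & [pred j : 'I_d | lam j == l2]]]| = 0%N.
    by apply/eqP; rewrite -(eqn_add2l d) addn0 HC.
  have := card0_eq HC0 i.
  by rewrite !inE /= (negbTE ne) (negbTE ne2).
have split_sum (F : 'I_d -> R) : \sum_(i < d) F i =
    \sum_(i < d | lam i == l1) F i + \sum_(i < d | lam i == l2) F i.
  rewrite (bigID (fun i => lam i == l1)) /=; congr (_ + _); apply: eq_bigl => i.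
  case: (eqVneq (lam i) l1) => [->|/allI ->]; first by rewrite l1n2.
  by rewrite eqxx.
have lminE : lambda_min lam = l2.
  apply/eqP; rewrite eq_le; apply/andP; split.
    have : (0 < #|[pred j : 'I_d | lam j == l2]|)%N by rewrite c2.
    by case/card_gt0P => i2; rewrite inE => /eqP <-; exact: lmin_le.
  apply: (@lmin_ind R d lam (fun x => l2 <= x)) => // [i|x y hx hy].
    by case: (eqVneq (lam i) l1) => [->|/allI ->]; [exact: ltW|exact: lexx].
  by rewrite le_min hx hy.
set c := l1 ^+ 2 + l2 ^+ 2.
have c0 : 0 < c by rewrite /c addr_gt0 // exprn_gt0.
have TE : T = h%:R * c.
  rewrite Tr split_sum.
  rewrite (eq_bigr (fun _ => l1 ^+ 2)); last by move=> i /eqP ->.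
  rewrite [X in _ + X](eq_bigr (fun _ => l2 ^+ 2)); last by move=> i /eqP ->.
  rewrite (sumr_const [pred i : 'I_d | lam i == l1]) (sumr_const [pred i : 'I_d | lam i == l2]).
  by rewrite c1 c2 /c; ring.
pose A t := \sum_(i < d | lam i == l1) D2 i t.
pose B t := \sum_(i < d | lam i == l2) D2 i t.
have SE t : S t = l1 * A t + l2 * B t.
  rewrite /S split_sum /A /B !mulr_sumr; congr (_ + _); apply: eq_bigr => i /eqP -> //.
have NE t : N t = l1 ^+ 2 * A t + l2 ^+ 2 * B t.
  rewrite /N split_sum /A /B !mulr_sumr; congr (_ + _); apply: eq_bigr => i /eqP -> //.
have Age0 t : 0 <= t -> 0 <= A t by move=> t0; apply: sumr_ge0 => i _; exact: D2ge0.
have Bge0 t : 0 <= t -> 0 <= B t by move=> t0; apply: sumr_ge0 => i _; exact: D2ge0.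
pose p t := l1 * A t / S t.
have gE t : 0 <= t -> g t = 2 * (l2 + (l1 - l2) * p t) / c.
  move=> t0; have St := Spos t t0; rewrite SE in St.
  rewrite gamE NE /p SE TE dR; field.
  by rewrite (lt0r_neq0 St) (lt0r_neq0 c0) (lt0r_neq0 hR).
have Ader (t : R) : 0 < t -> is_derive t 1 A
    (-2 * g t * l1 * A t + 2 * g t ^+ 2 * l1 * risk lam D2 t * h%:R).
  move=> t0.
  have H : is_derive t 1 (\sum_(i < d) (fun s => if lam i == l1 then D2 i s else 0))
     (\sum_(i < d) (if lam i == l1 then
        (- 2 * gamma_line K lam D2 t * lam i * D2 i t
        + 2 * gamma_line K lam D2 t ^+ 2 * lam i * risk lam D2 t) else 0)).
    apply: is_derive_sum => i /=; case: (lam i == l1); [exact: D2der | exact: is_derive_cst].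
  have HA : \sum_(i < d) (fun s => if lam i == l1 then D2 i s else 0) = A.
    by apply/funext => s; rewrite fct_sumE /A [RHS]big_mkcond.
  rewrite HA in H; apply: is_derive_eq H _.
  rewrite -big_mkcond /=.
  rewrite (eq_bigr (fun i => (-2 * g t * l1) * D2 i t + 2 * g t ^+ 2 * l1 * risk lam D2 t)); last first.
    by move=> i /eqP ->; rewrite -[gamma_line K lam D2 t]/(g t); ring.
  rewrite big_split /= -mulr_sumr (sumr_const [pred i : 'I_d | lam i == l1]) c1 /A.
  ring.
pose pd t := 2 * (l2 + (l1 - l2) * p t) / c / c * Hf l1 l2 (p t).
have pder (t : R) : 0 < t -> is_derive t 1 p (pd t).
  move=> t0; have St := Spos t (ltW t0).
  have H1 := is_deriveZ l1 (Ader t t0).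
  have H2 := is_deriveV (lt0r_neq0 St) (Sder t t0).
  have H := is_deriveM H1 H2.
  apply: is_derive_eq H _.
  rewrite /GRing.scale /=.
  have St' := St; rewrite SE in St'.
  rewrite /pd /risk -/(S t) (gE t (ltW t0)) /p SE TE dR /Hf /c.
  rewrite /GRing.scale /=.
  field.
  by rewrite (lt0r_neq0 St') (lt0r_neq0 hR) -/c (lt0r_neq0 c0).
have [ps [Lc [ps0 psb Lc0 HfF]]] := @root_facts R l1 l2 l20 l12.
pose q s := p s - ps.
have qder (t : R) : 0 < t -> is_derive t 1 q (pd t).
  move=> t0; have H := is_deriveB (pder t t0) (is_derive_cst ps t 1).
  by rewrite subr0 in H.
have pB (t : R) : 0 < t -> 0 <= p t <= 1.
  move=> t0; have St := Spos t (ltW t0).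
  have A0 := Age0 t (ltW t0); have B0 := Bge0 t (ltW t0).
  apply/andP; split.
    by apply: divr_ge0; [apply: mulr_ge0; [exact: ltW | exact: A0] | exact: ltW].
  rewrite /p ler_pdivrMr // mul1r SE lerDl; apply: mulr_ge0 => //; exact: ltW.
have cn0 : c != 0 by exact: lt0r_neq0.
pose mm := - (4 * l2 * Lc) / c ^+ 2.
have mm0 : 0 < mm.
  rewrite /mm divr_gt0 ?exprn_gt0 // oppr_gt0 pmulr_rlt0 //.
  by rewrite mulr_gt0.
have dec := @decay R (q * q) (fun t => q t *: pd t + q t *: pd t) mm mm0
   (fun t t0 => is_deriveM (qder t t0) (qder t t0)).
have dec' : forall t : R, 1 <= t -> q t * q t * ((1 - mm) + mm * t) <= q 1 * q 1.
  apply: dec.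
    by move=> t _; rewrite /= -expr2 sqr_ge0.
  move=> t t0; have /andP[p0 p1] := pB t t0.
  have [Lp [LpLc HfE]] := HfF (p t) (pB t t0).
  pose G := 2 * (l2 + (l1 - l2) * p t) / c.
  have Gge : 2 * l2 / c <= G.
    rewrite /G ler_pM2r ?invr_gt0 //.
    have : 0 <= (l1 - l2) * p t by rewrite mulr_ge0 // subr_ge0 ltW.
    lra.
  have G0 : 0 <= G.
    apply: le_trans Gge; apply: divr_ge0; [apply: mulr_ge0 => //; exact: ltW | exact: ltW].
  rewrite /GRing.scale /=.
  have E1 : q t * pd t + q t * pd t = (2 / c * q t ^+ 2) * (G * Lp).
    by rewrite /pd HfE /G /q; ring.
  have E2 : - mm * (q t * q t) = (2 / c * q t ^+ 2) * ((2 * l2 / c) * Lc).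
    by rewrite /mm; field.
  rewrite E1 E2; apply: ler_wpM2l.
    by rewrite mulr_ge0 ?sqr_ge0 // divr_ge0 // ltW.
  apply: (le_trans (ler_wpM2l G0 LpLc)).
  exact: (ler_wnM2r (ltW Lc0) Gge).
pose l := 2 * (l2 + (l1 - l2) * ps) / c.
have l12' : 0 < l1 - l2 by rewrite subr_gt0.
exists l; split; last split.
- apply/cvgrPdist_le => e e0.
  pose k := 2 * (l1 - l2) / c.
  have k0 : 0 < k by rewrite /k divr_gt0 // mulr_gt0.
  pose eps := e / k.
  have eps0 : 0 < eps by rewrite /eps divr_gt0.
  pose w := eps ^+ 2.
  have w0 : 0 < w by rewrite /w exprn_gt0.
  pose V1 := q 1 * q 1.
  have V10 : 0 <= V1 by rewrite /V1 -expr2 sqr_ge0.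
  near=> t.
  have t1 : 1 <= t by near: t; apply: nbhs_pinfty_ge; exact: num_real.
  have tb : (V1 / w + mm) / mm < t by near: t; apply: nbhs_pinfty_gt; exact: num_real.
  have t0 : 0 < t by exact: lt_le_trans ltr01 t1.
  have Hd := dec' t t1.
  have Qb : V1 / w + 1 < (1 - mm) + mm * t.
    move: tb; rewrite ltr_pdivrMr // => tb; lra.
  have Vt0 : 0 <= q t * q t by rewrite -expr2 sqr_ge0.
  have H3 : q t * q t * (V1 / w + 1) <= V1.
    exact: le_trans (ler_wpM2l Vt0 (ltW Qb)) Hd.
  have H4 : q t * q t * (V1 + w) <= V1 * w.
    have E : q t * q t * (V1 / w + 1) * w = q t * q t * (V1 + w).
      by field; exact: lt0r_neq0.
    by have := ler_wpM2r (ltW w0) H3; rewrite E.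
  have Vt : q t * q t <= w by nra.
  rewrite -[gamma_line K lam D2 t]/(g t) (gE t (ltW t0)).
  have -> : l - 2 * (l2 + (l1 - l2) * p t) / c = k * (- q t) by rewrite /l /k /q; ring.
  rewrite normrM gtr0_norm // normrN.
  have qe : `|q t| <= eps.
    rewrite ler_norml; apply/andP; split; rewrite /w in Vt; nra.
  have -> : e = k * eps by rewrite /eps; field; exact: lt0r_neq0.
  by rewrite ler_pM2l.
- rewrite lminE -/T TE dR.
  have -> : l2 / ((2 * h%:R)^-1 * (h%:R * c)) = (2 * l2) / c.
    by field; rewrite (lt0r_neq0 hR) cn0.
  rewrite /l ler_pM2r ?invr_gt0 //.
  have : 0 <= (l1 - l2) * ps by rewrite mulr_ge0 // ltW.
  lra.
- rewrite lminE -/T TE dR.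
  have -> : 2 * l2 / ((2 * h%:R)^-1 * (h%:R * c)) = (4 * l2) / c.
    by field; rewrite (lt0r_neq0 hR) cn0.
  rewrite /l ler_pM2r ?invr_gt0 //.
  lra.
Unshelve. all: end_near.
Qed.
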